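(* Let $P$ be a discrete Dubins path, let $e=ab$ be an inflection edge of $P$ (traversed from $a$ to $b$) and let $bc$ be the edge of $P$ following $e$. Call a vector $T$ admissible for $e$ if the ray from $b$ in direction $T$ points into the (open) side of the supporting line of $e$ on which $bc$ lies. For a vector $T$, let $P(T)$ be the path obtained from $P$ by rigidly translating the part of $P$ starting from $b$ by $T$ and replacing the edge $ab$ by the segment from $a$ to $b+T$. Then for every vector $T$ admissible for $e$ there exists $\varepsilon>0$ such that $P(\varepsilon T)$ is a discrete curvature-constrained path.
   Context: Fix an angle $\theta$ with $0\le\theta\le\pi/2$ such that $2\pi/\theta$ is an integer, and a length $\ell>0$. For a polygonal path, the turn at an internal vertex is the angle in $[0,\pi]$ between the direction of the incoming edge and the direction of the outgoing edge. An edge is short if its length is $<\ell$, normal if $=\ell$, long if $>\ell$. An edge $e$ with an adjacent edge at each end is an inflection edge if its two adjacent edges lie on opposite sides of the supporting line of $e$, and non-inflection otherwise. A discrete curvature-constrained path is a polygonal path such that: (i) the turn at every internal vertex is at most $\theta$; (ii) no two adjacent edges are both short; (iii) for every short non-inflection edge $ab$ with adjacent edges $a^-a$ and $bb^+$, the angle between the directions $\overrightarrow{a^-a}$ and $\overrightarrow{bb^+}$ is at most $\theta$. A configuration is a pair $(u,U)$ of a point $u$ and a vector $U$ of length $\ell$. A polygonal path $P$ with first vertex $u$ starts at $(u,U)$ if prepending the segment from $u-U$ to $u$ (the pre-edge) yields a discrete curvature-constrained path; $P$ with last vertex $v$ ends at $(v,V)$ if appending the segment from $v$ to $v+V$ (the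 post-edge) yields a discrete curvature-constrained path. A discrete Dubins path is a discrete curvature-constrained path of minimum length among all those starting at a given configuration $\mathcal U$ and ending at a given configuration $\mathcal V$. Standing assumption: paths make a non-zero turn at every internal vertex. *)

(* Defs.v *)
From Stdlib Require Import Reals Lra List.
Import ListNotations.
Open Scope R_scope.

Definition pt := (R * R)%type.
Definition vadd (u v : pt) : pt := (fst u + fst v, snd u + snd v).
Definition vsub (u v : pt) : pt := (fst u - fst v, snd u - snd v).
Definition vscale (k : R) (u : pt) : pt := (k * fst u, k * snd u).
Definition dot (u v : pt) : R := fst u * fst v + snd u * snd v.
(* z-component of the cross product: its sign tells on which side of the
   line directed by u the vector v points *)
Definition cross (u v : pt) : R := fst u * snd v - snd u * fst v.
Definition norm (u : pt) : R := sqrt (dot u u).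
Definition dist (p q : pt) : R := norm (vsub q p).

Definition angle (u v : pt) : R := acos (dot u v / (norm u * norm v)).

(* A polygonal path is the list of its vertices v_0, ..., v_{n-1};
   its edges are v_j v_{j+1} for j + 1 < n. *)
Definition vtx (P : list pt) (j : nat) : pt := nth j P (0, 0).
Definition nedges (P : list pt) : nat := pred (length P).
Definition edir (P : list pt) (j : nat) : pt := vsub (vtx P (S j)) (vtx P j).
Definition elen (P : list pt) (j : nat) : R := norm (edir P j).

Fixpoint path_length (P : list pt) : R :=
  match P with
  | p :: ((q :: _) as P') => dist p q + path_length P'
  | _ => 0
  end.

Definition nondegenerate (P : list pt) : Prop :=
  forall j, (j < nedges P)%nat -> vtx P j <> vtx P (S j).

(* turn at internal vertex j (0 < j < length P - 1) *)
Definition turn (P : list pt) (j : nat) : R := angle (edir P (pred j)) (edir P j).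

Definition short (l : R) (P : list pt) (j : nat) : Prop := elen P j < l.

Definition has_both_adjacent (P : list pt) (j : nat) : Prop :=
  (1 <= j)%nat /\ (S (S j) < length P)%nat.

(* edge j = v_j v_{j+1} is an inflection edge: its adjacent edges v_{j-1}v_j and
   v_{j+1}v_{j+2} lie (strictly) on opposite sides of its supporting line. *)
Definition inflection (P : list pt) (j : nat) : Prop :=
  has_both_adjacent P j /\
  cross (edir P j) (vsub (vtx P (pred j)) (vtx P j)) *
  cross (edir P j) (vsub (vtx P (S (S j))) (vtx P j)) < 0.

Definition non_inflection (P : list pt) (j : nat) : Prop :=
  has_both_adjacent P j /\ ~ inflection P j.

Definition dccp (l theta : R) (P : list pt) : Prop :=
  nondegenerate P /\
  (forall j, (1 <= j)%nat -> (S j < length P)%nat -> turn P j <= theta) /\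
  (forall j, (S j < nedges P)%nat -> ~ (short l P j /\ short l P (S j))) /\
  (forall j, short l P j -> non_inflection P j ->
     angle (edir P (pred j)) (edir P (S j)) <= theta).

Definition nonzero_turns (P : list pt) : Prop :=
  forall j, (1 <= j)%nat -> (S j < length P)%nat -> turn P j <> 0.

Definition is_config (l : R) (U : pt) : Prop := norm U = l.

Definition starts_at (l theta : R) (P : list pt) (u U : pt) : Prop :=
  exists P', P = u :: P' /\ dccp l theta (vsub u U :: P).

Definition ends_at (l theta : R) (P : list pt) (v V : pt) : Prop :=
  P <> [] /\ last P (0, 0) = v /\ dccp l theta (P ++ [vadd v V]).

Definition dubins (l theta : R) (u U v V : pt) (P : list pt) : Prop :=
  dccp l theta P /\ nonzero_turns P /\
  starts_at l theta P u U /\ ends_at l theta P v V /\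
  forall Q, dccp l theta Q -> nonzero_turns Q ->
    starts_at l theta Q u U -> ends_at l theta Q v V ->
    path_length P <= path_length Q.

(* P(T): translate the part of P starting from vertex k (= b) by T; the edge
   v_{k-1} v_k is thereby replaced by the segment from v_{k-1} to v_k + T. *)
Definition translate_tail (P : list pt) (k : nat) (T : pt) : list pt :=
  firstn k P ++ map (vadd T) (skipn k P).

(* T admissible for the inflection edge j = ab (a = v_j, b = v_{j+1}, c = v_{j+2}):
   the ray from b in direction T points into the open side of line ab containing bc *)
Definition admissible (P : list pt) (j : nat) (T : pt) : Prop :=
  cross (edir P j) T * cross (edir P j) (edir P (S j)) > 0.

(* Main.v *)
Require Import Defs.
From Stdlib Require Import Reals List Lra Lia Psatz Classical.
Import ListNotations.
Open Scope R_scope.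


Ltac dpts := repeat match goal with p : pt |- _ => destruct p end.
Ltac dterms := repeat match goal with
  | |- context [fst ?t] => lazymatch t with (_,_) => fail | _ => destruct t end
  | |- context [snd ?t] => lazymatch t with (_,_) => fail | _ => destruct t end end.
Ltac veq := unfold vadd, vsub, vscale, dot, cross; simpl; dterms; simpl; f_equal; ring.
Ltac req := unfold vadd, vsub, vscale, dot, cross; simpl; dterms; simpl; ring.

Lemma dot_self_nonneg x : 0 <= dot x x.
Proof. unfold dot; dpts; simpl; nra. Qed.

Lemma dot_self_pos x : x <> (0,0) -> 0 < dot x x.
Proof. unfold dot; destruct x as [a b]; simpl; intros H.
  destruct (Req_dec a 0); destruct (Req_dec b 0); subst; try nra. exfalso; auto. Qed.

Lemma norm_sq x : norm x * norm x = dot x x.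
Proof. unfold norm; apply sqrt_sqrt, dot_self_nonneg. Qed.

Lemma norm_nonneg x : 0 <= norm x.
Proof. unfold norm; apply sqrt_pos. Qed.

Lemma norm_pos x : x <> (0,0) -> 0 < norm x.
Proof. intros H; unfold norm; apply sqrt_lt_R0, dot_self_pos, H. Qed.

Lemma lagrange x y : dot x y * dot x y + cross x y * cross x y = dot x x * dot y y.
Proof. req. Qed.

Lemma cross_nz_l x y : cross x y <> 0 -> x <> (0,0).
Proof. intros H E; subst; apply H; unfold cross; simpl; ring. Qed.
Lemma cross_nz_r x y : cross x y <> 0 -> y <> (0,0).
Proof. intros H E; subst; apply H; unfold cross; simpl; ring. Qed.

Lemma norm_scale k x : 0 <= k -> norm (vscale k x) = k * norm x.
Proof. intros Hk; unfold norm.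
  replace (dot (vscale k x) (vscale k x)) with ((k*k) * dot x x) by req.
  rewrite sqrt_mult; [|nra|apply dot_self_nonneg]. rewrite sqrt_square; auto. Qed.

Lemma acos_mono x y : x <= y -> acos y <= acos x.
Proof.
  intros Hxy.
  destruct (Rle_dec 1 y).
  { assert (acos y = 0) as -> by (unfold acos; repeat case Rle_dec; lra).
    apply acos_bound. }
  destruct (Rle_dec x (-1)).
  { assert (acos x = PI) as -> by (unfold acos; repeat case Rle_dec; lra).
    apply acos_bound. }
  destruct (Rle_dec (acos y) (acos x)) as [|Hn]; auto.
  exfalso. apply Rnot_le_lt in Hn.
  pose proof (acos_bound x); pose proof (acos_bound y).
  pose proof (cos_decreasing_1 (acos x) (acos y)) as Hc.
  rewrite !cos_acos in Hc by lra. lra.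
Qed.

Lemma acos_half x : acos x <= PI/2 -> 0 <= x.
Proof.
  intros H. destruct (Rle_dec 0 x); auto. exfalso.
  destruct (Rle_dec x (-1)).
  { assert (acos x = PI) by (unfold acos; repeat case Rle_dec; lra). pose proof PI_RGT_0; lra. }
  pose proof (acos_bound x).
  assert (0 <= cos (acos x)) by (apply cos_ge_0; pose proof PI_RGT_0; lra).
  rewrite cos_acos in H1; lra.
Qed.

Lemma acos_ne0 x : x < 1 -> acos x <> 0.
Proof.
  intros H E. destruct (Rle_dec x (-1)).
  { assert (acos x = PI) by (unfold acos; repeat case Rle_dec; lra). pose proof PI_RGT_0; lra. }
  assert (cos (acos x) = x) by (apply cos_acos; lra). rewrite E, cos_0 in H0; lra.
Qed.

Lemma angle_sym x y : angle x y = angle y x.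
Proof. unfold angle. rewrite (Rmult_comm (norm y)). replace (dot y x) with (dot x y) by (unfold dot; ring). reflexivity. Qed.

Lemma angle_scale_r x y k : 0 < k -> angle x (vscale k y) = angle x y.
Proof.
  intros Hk. unfold angle. rewrite norm_scale by lra.
  match goal with |- acos ?a = acos ?b => replace a with b; [reflexivity|] end.
  replace (dot x (vscale k y)) with (k * dot x y) by req.
  destruct (Req_dec (norm x * norm y) 0) as [E|E].
  - replace (norm x * (k * norm y)) with (k * (norm x * norm y)) by ring. rewrite E.
    rewrite Rmult_0_r. unfold Rdiv. rewrite Rinv_0. ring.
  - assert (norm x <> 0) by (intro HH; apply E; rewrite HH; ring).
    assert (norm y <> 0) by (intro HH; apply E; rewrite HH; ring).
    field; repeat split; lra.
Qed.

Lemma angle_scale_l x y k : 0 < k -> angle (vscale k x) y = angle x y.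
Proof. intros; rewrite angle_sym, angle_scale_r, angle_sym; auto. Qed.

Lemma angle_dot x y th : angle x y <= th -> th <= PI/2 -> 0 <= dot x y.
Proof.
  intros H1 H2. unfold angle in H1. assert (H1b := acos_half (dot x y / (norm x * norm y)) ltac:(lra)). clear H1; rename H1b into H1.
  destruct (Req_dec (norm x * norm y) 0) as [E|E].
  - apply Rmult_integral in E. destruct E as [E|E].
    + assert (dot x x = 0) by (rewrite <- norm_sq, E; ring).
      assert (x = (0,0)) by (destruct (classic (x = (0,0))); auto; pose proof (dot_self_pos x H0); lra).
      subst; unfold dot; simpl; lra.
    + assert (dot y y = 0) by (rewrite <- norm_sq, E; ring).
      assert (y = (0,0)) by (destruct (classic (y = (0,0))); auto; pose proof (dot_self_pos y H0); lra).
      subst; unfold dot; simpl; lra.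
  - pose proof (norm_nonneg x); pose proof (norm_nonneg y).
    assert (0 < norm x * norm y) by nra.
    assert (Eq : dot x y = (dot x y / (norm x * norm y)) * (norm x * norm y)) by (field; repeat split; intro HH; apply E; rewrite HH; ring).
    rewrite Eq. apply Rmult_le_pos; lra.
Qed.

Lemma angle_ne0 x y : cross x y <> 0 -> angle x y <> 0.
Proof.
  intros H. unfold angle. apply acos_ne0.
  pose proof (norm_pos _ (cross_nz_l _ _ H)) as Hx.
  pose proof (norm_pos _ (cross_nz_r _ _ H)) as Hy.
  assert (0 < norm x * norm y) by nra.
  apply (Rmult_lt_reg_r (norm x * norm y)); auto.
  unfold Rdiv; rewrite Rmult_assoc, Rinv_l, Rmult_1_r, Rmult_1_l by lra.
  pose proof (lagrange x y). pose proof (norm_sq x). pose proof (norm_sq y).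
  assert (0 < cross x y * cross x y) by (apply Rsqr_pos_lt; auto).
  nra.
Qed.

Lemma angle_cmp x d d' : 0 < norm x -> 0 < norm d -> 0 < norm d' ->
  dot x d * norm d' <= dot x d' * norm d -> angle x d' <= angle x d.
Proof.
  intros Hx Hd Hd' H. unfold angle. apply acos_mono.
  replace (dot x d / (norm x * norm d)) with ((dot x d * norm d') / (norm x * norm d * norm d')) by (field; repeat split; lra).
  replace (dot x d' / (norm x * norm d')) with ((dot x d' * norm d) / (norm x * norm d * norm d')) by (field; repeat split; lra).
  unfold Rdiv. apply Rmult_le_compat_r; [|exact H].
  left; apply Rinv_0_lt_compat. apply Rmult_lt_0_compat; [apply Rmult_lt_0_compat|]; assumption.
Qed.

Definition ev (Q : R -> Prop) := exists e, 0 < e /\ forall t, 0 < t < e -> Q t.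

Lemma ev_and (Q1 Q2 : R -> Prop) : ev Q1 -> ev Q2 -> ev (fun t => Q1 t /\ Q2 t).
Proof.
  intros [e1 [He1 H1]] [e2 [He2 H2]]. exists (Rmin e1 e2). split.
  - apply Rmin_glb_lt; auto.
  - intros t Ht. pose proof (Rmin_l e1 e2); pose proof (Rmin_r e1 e2).
    split; [apply H1|apply H2]; lra.
Qed.

Lemma ev_mono (Q1 Q2 : R -> Prop) : ev Q1 -> (forall t, 0 < t -> Q1 t -> Q2 t) -> ev Q2.
Proof. intros [e [He H]] Hi. exists e; split; auto. intros t Ht; apply Hi; [lra|]; apply H; auto. Qed.

Lemma ev_all (Q : R -> Prop) : (forall t, 0 < t -> Q t) -> ev Q.
Proof. intros H; exists 1; split; [lra|]. intros t Ht; apply H; lra. Qed.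

Lemma ev_lt1 : ev (fun t => t < 1).
Proof. exists 1; split; [lra|]. intros t Ht; lra. Qed.

Lemma ev_pos a b c : 0 < a -> ev (fun t => 0 < a + b*t + c*(t*t)).
Proof.
  intros Ha. set (M := Rabs b + Rabs c + 1).
  assert (HM : 1 <= M) by (unfold M; pose proof (Rabs_pos b); pose proof (Rabs_pos c); lra).
  exists (Rmin 1 (a / (2*M))). split.
  - apply Rmin_glb_lt; [lra|]. apply Rdiv_lt_0_compat; lra.
  - intros t [Ht1 Ht2]. pose proof (Rmin_l 1 (a/(2*M))); pose proof (Rmin_r 1 (a/(2*M))).
    assert (t < 1) by lra.
    assert (Hta : t * (2*M) < a).
    { assert (Hq : t < a / (2*M)) by lra.
      apply (Rmult_lt_compat_r (2*M)) in Hq; [|lra].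
      unfold Rdiv in Hq. rewrite Rmult_assoc, Rinv_l, Rmult_1_r in Hq; lra. }
    assert (Hb : - Rabs b <= b) by (pose proof (Rle_abs (-b)) as Hq; rewrite Rabs_Ropp in Hq; lra).
    assert (Hc : - Rabs c <= c) by (pose proof (Rle_abs (-c)) as Hq; rewrite Rabs_Ropp in Hq; lra).
    assert (Hb' : - Rabs b * t <= b * t) by nra.
    assert (Hc' : - Rabs c * (t*t) <= c * (t*t)) by nra.
    assert (Rabs c * (t*t) <= Rabs c * t) by (apply Rmult_le_compat_l; [apply Rabs_pos|nra]).
    unfold M in Hta. lra.
Qed.

Lemma L_lem x d T : 0 <= dot x d -> 0 < cross d x * cross d T ->
  ev (fun t => angle x (vadd d (vscale t T)) <= angle x d).
Proof.
  intros Hp HK.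
  assert (Hdx : cross d x <> 0) by (intro E; rewrite E in HK; lra).
  assert (HdT : cross d T <> 0) by (intro E; rewrite E in HK; lra).
  pose proof (cross_nz_l _ _ Hdx) as Hd0. pose proof (cross_nz_r _ _ Hdx) as Hx0.
  pose proof (dot_self_pos _ Hd0) as Hnd.
  assert (Iq : dot x T * dot d d = dot x d * dot d T + cross d x * cross d T) by req.
  assert (key : forall t, 0 < t -> 0 <= dot x d + t * dot x T ->
     (dot x d)^2 * (dot d d + 2*t*dot d T + t*t*dot T T) <= (dot x d + t * dot x T)^2 * dot d d ->
     angle x (vadd d (vscale t T)) <= angle x d).
  { intros t Ht H1 H2.
    assert (Hd'0 : vadd d (vscale t T) <> (0,0)).
    { apply (cross_nz_r d). replace (cross d (vadd d (vscale t T))) with (t * cross d T) by req.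
      apply Rmult_integral_contrapositive; split; lra. }
    apply angle_cmp; try apply norm_pos; auto.
    replace (dot x (vadd d (vscale t T))) with (dot x d + t * dot x T) by req.
    pose proof (norm_sq (vadd d (vscale t T))) as E1.
    replace (dot (vadd d (vscale t T)) (vadd d (vscale t T))) with (dot d d + 2*t*dot d T + t*t*dot T T) in E1 by req.
    pose proof (norm_sq d) as E2.
    pose proof (norm_nonneg d). pose proof (norm_nonneg (vadd d (vscale t T))).
    set (S := norm d) in *. set (S' := norm (vadd d (vscale t T))) in *.
    set (p := dot x d) in *. set (r := p + t * dot x T) in *.
    assert (Hsq : (p * S')^2 <= (r * S)^2).
    { replace ((p*S')^2) with (p^2 * (S'*S')) by ring. replace ((r*S)^2) with (r^2*(S*S)) by ring.
      rewrite E1, E2. lra. }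
    destruct (Rle_dec (p*S') (r*S)); auto.
    exfalso. assert (0 <= r*S) by (apply Rmult_le_pos; auto).
    nra. }
  destruct (Rle_lt_or_eq_dec _ _ Hp) as [Hp'|Hp'].
  - pose proof (ev_pos (2 * dot x d * (cross d x * cross d T))
        ((dot x T)^2 * dot d d - (dot x d)^2 * dot T T) 0 ltac:(nra)) as E1.
    pose proof (ev_pos (dot x d) (dot x T) 0 Hp') as E2.
    apply (ev_mono _ _ (ev_and _ _ E1 E2)).
    intros t Ht [H1 H2]. apply key; auto; [nra|].
    assert (Hdiff : (dot x d + t * dot x T)^2 * dot d d - (dot x d)^2 * (dot d d + 2*t*dot d T + t*t*dot T T)
       = t * (2 * dot x d * (cross d x * cross d T) + ((dot x T)^2 * dot d d - (dot x d)^2 * dot T T) * t)).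
    { assert (EK : cross d x * cross d T = dot x T * dot d d - dot x d * dot d T) by lra.
      rewrite EK. ring. }
    nra.
  - assert (Hq : 0 < dot x T).
    { apply (Rmult_lt_reg_r (dot d d)); [exact Hnd|]. rewrite <- Hp' in Iq. lra. }
    apply ev_all. intros t Ht. apply key; auto.
    + rewrite <- Hp'. nra.
    + rewrite <- Hp'. replace ((0 + t * dot x T)^2 * dot d d) with ((t*t)*(dot x T * dot x T) * dot d d) by ring.
      assert (0 <= (t*t)*(dot x T * dot x T) * dot d d) by (apply Rmult_le_pos; [apply Rmult_le_pos|]; nra).
      replace (0^2 * (dot d d + 2*t*dot d T + t*t*dot T T)) with 0 by ring. lra.
Qed.

Lemma L_lem_sym x d T : 0 <= dot x d -> 0 < cross d x * cross d T ->
  ev (fun t => angle (vadd d (vscale t T)) x <= angle d x).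
Proof. intros H1 H2. apply (ev_mono _ _ (L_lem x d T H1 H2)). intros t _ H.
  rewrite (angle_sym _ x), (angle_sym d x); auto. Qed.

Lemma SL p q x : cross p q <> 0 -> 0 <= dot p q -> 0 <= dot q x -> 0 <= dot p x -> x <> (0,0) ->
  cross q p * cross q x <= 0 -> 0 < cross p x * cross p q.
Proof.
  intros H1 H2 H3 H4 H5 H6.
  assert (I1 : cross q x * dot p p = dot p x * cross q p + cross p x * dot q p) by req.
  assert (I2 : dot q x * dot p p = dot p x * dot p q + cross p x * cross p q) by req.
  assert (I3 : dot p x * dot p x + cross p x * cross p x = dot p p * dot x x) by req.
  assert (Icp : cross q p = - cross p q) by req.
  assert (Idq : dot q p = dot p q) by req.
  pose proof (dot_self_pos _ (cross_nz_l _ _ H1)) as Hpp.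
  pose proof (dot_self_pos _ H5) as Hxx.
  destruct (Rlt_dec 0 (cross p x * cross p q)) as [|Hn]; auto. exfalso.
  apply Rnot_lt_le in Hn.
  set (X := cross p x * cross p q) in *.
  assert (A1 : cross q x * cross q p * dot p p = dot p x * (cross p q * cross p q) - X * dot p q).
  { unfold X. rewrite Icp in *. rewrite Idq in I1. nra. }
  assert (A2 : cross q x * cross q p * dot p p <= 0).
  { replace (cross q x * cross q p * dot p p) with ((cross q p * cross q x) * dot p p) by ring. nra. }
  assert (Hcc : 0 < cross p q * cross p q) by (apply Rsqr_pos_lt; auto).
  assert (E1 : dot p x = 0) by nra.
  rewrite E1 in I2, I3.
  assert (E2 : X = 0) by (unfold X in *; nra).
  assert (E3 : cross p x = 0).
  { unfold X in E2. apply Rmult_integral in E2. destruct E2; auto. contradiction. }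
  rewrite E3 in I3. nra.
Qed.

Lemma edir_zero P i : edir P i = (0,0) -> vtx P i = vtx P (S i).
Proof. unfold edir, vsub. destruct (vtx P (S i)) as [a b], (vtx P i) as [c d]; simpl.
  intros H; injection H; intros; f_equal; lra. Qed.

Lemma cross_prev P j : (1 <= j)%nat ->
  cross (edir P j) (vsub (vtx P (pred j)) (vtx P j)) = - cross (edir P j) (edir P (pred j)).
Proof. intros Hj. destruct j as [|j]; [lia|]. simpl pred. unfold edir. req. Qed.

Lemma cross_next P j :
  cross (edir P j) (vsub (vtx P (S (S j))) (vtx P j)) = cross (edir P j) (edir P (S j)).
Proof. unfold edir. req. Qed.

Lemma infl_iff P j : inflection P j <-> has_both_adjacent P j /\
  0 < cross (edir P j) (edir P (pred j)) * cross (edir P j) (edir P (S j)).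
Proof.
  unfold inflection. split; intros [Hb H]; split; auto; destruct Hb as [Hb1 Hb2];
  rewrite cross_prev, cross_next in *; auto; lra.
Qed.

Definition elenP := elen.

Lemma dccp_local l th P P' (ch : nat -> Prop) :
  length P' = length P -> dccp l th P ->
  (forall i, (S i < length P)%nat -> ~ ch i -> edir P' i = edir P i) ->
  (forall i, (S i < length P)%nat -> ch i -> edir P' i <> (0,0)) ->
  (forall i, (1 <= i)%nat -> (S i < length P)%nat -> (ch (pred i) \/ ch i) -> turn P' i <= th) ->
  (forall i, (S i < nedges P)%nat -> (ch i \/ ch (S i)) -> ~ (short l P' i /\ short l P' (S i))) ->
  (forall j, (ch (pred j) \/ ch j \/ ch (S j)) -> short l P' j -> non_inflection P' j ->
        angle (edir P' (pred j)) (edir P' (S j)) <= th) ->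
  dccp l th P'.
Proof.
  intros Hlen [D1 [D2 [D3 D4]]] Heq H1 H2 H3 H4.
  unfold dccp, nondegenerate, nedges in *. rewrite Hlen. split; [|split; [|split]].
  - intros i Hi E.
    assert (Ez : edir P' i = (0,0)) by (unfold edir; rewrite E; unfold vsub; f_equal; ring).
    destruct (classic (ch i)) as [C|C].
    + apply (H1 i); auto; lia.
    + rewrite Heq in Ez by (auto; lia). apply (D1 i); [lia|]. apply edir_zero; auto.
  - intros i Hi1 Hi2. destruct (classic (ch (pred i) \/ ch i)) as [C|C]; [apply H2; auto|].
    unfold turn. rewrite !Heq by (auto; lia). apply D2; auto.
  - intros i Hi. destruct (classic (ch i \/ ch (S i))) as [C|C]; [apply H3; auto|].
    unfold short, elen. rewrite !Heq by (auto; lia). apply (D3 i). auto.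
  - intros j Hs Hn. destruct (classic (ch (pred j) \/ ch j \/ ch (S j))) as [C|C]; [apply H4; auto|].
    destruct Hn as [[Hb1 Hb2] Hni]. rewrite Hlen in Hb2.
    unfold short, elen in *. rewrite Heq in Hs by (auto; lia).
    rewrite !Heq by (auto; lia). apply D4; auto.
    split; [split; auto|]. intro Hi. apply Hni. apply infl_iff. apply infl_iff in Hi.
    destruct Hi as [_ Hi]. split; [split; auto; rewrite Hlen; auto|].
    rewrite !Heq by (auto; lia). auto.
Qed.

Lemma nonzero_local P P' (ch : nat -> Prop) :
  length P' = length P -> nonzero_turns P ->
  (forall i, (S i < length P)%nat -> ~ ch i -> edir P' i = edir P i) ->
  (forall i, (1 <= i)%nat -> (S i < length P)%nat -> (ch (pred i) \/ ch i) -> turn P' i <> 0) ->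
  nonzero_turns P'.
Proof.
  intros Hlen HP Heq H i Hi1 Hi2. rewrite Hlen in Hi2.
  destruct (classic (ch (pred i) \/ ch i)) as [C|C]; [apply H; auto|].
  unfold turn. rewrite !Heq by (auto; lia). apply HP; auto.
Qed.

Lemma length_tt P k T : (k <= length P)%nat -> length (translate_tail P k T) = length P.
Proof. intros Hk. unfold translate_tail. rewrite length_app, length_map, length_skipn, firstn_length_le; lia. Qed.

Lemma vtx_tt_lo P k T i : (i < k)%nat -> (k <= length P)%nat -> vtx (translate_tail P k T) i = vtx P i.
Proof. intros Hi Hk. unfold vtx, translate_tail. rewrite app_nth1 by (rewrite firstn_length_le; lia).
  rewrite nth_firstn. replace (i <? k)%nat with true by (symmetry; apply Nat.ltb_lt; lia). auto. Qed.

Lemma vtx_tt_hi P k T i : (k <= i)%nat -> (i < length P)%nat -> vtx (translate_tail P k T) i = vadd T (vtx P i).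
Proof. intros Hi Hk. unfold vtx, translate_tail. rewrite app_nth2 by (rewrite firstn_length_le; lia).
  rewrite firstn_length_le by lia.
  rewrite nth_indep with (d' := vadd T (0,0)) by (rewrite length_map, length_skipn; lia).
  rewrite map_nth, nth_skipn. f_equal. f_equal. lia. Qed.

Lemma edir_tt_eq P k T : (1 <= k)%nat -> (k < length P)%nat ->
  edir (translate_tail P k T) (pred k) = vadd (edir P (pred k)) T.
Proof. intros. unfold edir. replace (S (pred k)) with k by lia.
  rewrite vtx_tt_hi, vtx_tt_lo by lia. veq. Qed.

Lemma edir_tt_ne P k T i : (1 <= k)%nat -> (k <= length P)%nat -> (S i < length P)%nat -> i <> pred k ->
  edir (translate_tail P k T) i = edir P i.
Proof. intros. unfold edir. destruct (Nat.lt_ge_cases i (pred k)).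
  - rewrite !vtx_tt_lo by lia. auto.
  - rewrite !vtx_tt_hi by lia. veq. Qed.

Fixpoint upd (L : list pt) (m : nat) (x : pt) : list pt :=
  match L, m with
  | [], _ => []
  | _ :: r, O => x :: r
  | y :: r, S m' => y :: upd r m' x
  end.

Lemma length_upd L m x : length (upd L m x) = length L.
Proof. revert m; induction L; intros [|m]; simpl; auto. Qed.

Lemma vtx_upd_eq L m x : (m < length L)%nat -> vtx (upd L m x) m = x.
Proof. unfold vtx. revert m; induction L; intros [|m] H; simpl in *; auto; try lia. apply IHL; lia. Qed.

Lemma vtx_upd_ne L m x i : i <> m -> vtx (upd L m x) i = vtx L i.
Proof. unfold vtx. revert m i; induction L; intros [|m] [|i] H; simpl in *; auto; try lia. Qed.

Lemma upd_app L L2 m x : (m < length L)%nat -> upd (L ++ L2) m x = upd L m x ++ L2.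
Proof. revert m; induction L; intros [|m] H; simpl in *; auto; try lia. f_equal. apply IHL; lia. Qed.

Lemma last_upd L m x d : (S m < length L)%nat -> last (upd L m x) d = last L d.
Proof.
  revert m; induction L as [|a L IH]; intros [|m] H; simpl in *; try lia.
  - destruct L; simpl in *; [lia|auto].
  - destruct L as [|b L]; simpl in *; [lia|].
    rewrite <- (IH m) by lia. destruct m; simpl; destruct L; simpl; auto.
Qed.

Lemma edir_upd_prev L m x : (1 <= m)%nat -> (m < length L)%nat ->
  edir (upd L m x) (pred m) = vsub x (vtx L (pred m)).
Proof. intros. unfold edir. replace (S (pred m)) with m by lia.
  rewrite vtx_upd_eq, vtx_upd_ne by lia. auto. Qed.

Lemma edir_upd_next L m x : (m < length L)%nat ->
  edir (upd L m x) m = vsub (vtx L (S m)) x.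
Proof. intros. unfold edir. rewrite vtx_upd_eq, vtx_upd_ne by lia. auto. Qed.

Lemma edir_upd_other L m x i : i <> m -> S i <> m -> edir (upd L m x) i = edir L i.
Proof. intros. unfold edir. rewrite !vtx_upd_ne by lia. auto. Qed.

Lemma path_length_upd L m x : (1 <= m)%nat -> (S m < length L)%nat ->
  path_length L - path_length (upd L m x) =
  Defs.dist (vtx L (pred m)) (vtx L m) + Defs.dist (vtx L m) (vtx L (S m))
  - Defs.dist (vtx L (pred m)) x - Defs.dist x (vtx L (S m)).
Proof.
  revert m; induction L as [|a L IH]; intros [|m] H1 H2; simpl in *; try lia.
  destruct L as [|b L]; simpl in *; try lia.
  destruct m as [|m].
  - destruct L as [|c L]; simpl in *; try lia. unfold vtx; simpl. ring.
  - assert (E := IH (S m) ltac:(lia) ltac:(lia)). simpl in E.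
    unfold vtx in *; simpl in *.
    
    destruct L as [|c L]; simpl in *; try lia.
    rewrite <- E. simpl. ring.
Qed.

Lemma vscale_nz k w : k <> 0 -> w <> (0,0) -> vscale k w <> (0,0).
Proof. intros Hk Hw E. apply Hw. unfold vscale in E. destruct w as [a b]; simpl in *.
  injection E; intros E1 E2. apply Rmult_integral in E1; apply Rmult_integral in E2.
  f_equal; lra. Qed.

Lemma norm_add_ge d w t : 0 <= t -> 0 <= dot d w -> norm d <= norm (vadd d (vscale t w)).
Proof. intros Ht Hdw. unfold norm. apply sqrt_le_1_alt.
  replace (dot (vadd d (vscale t w)) (vadd d (vscale t w))) with (dot d d + 2*t*dot d w + t*t*dot w w) by req.
  pose proof (dot_self_nonneg w). nra. Qed.

Lemma dot_lt_norm d w : cross d w <> 0 -> dot d w < norm d * norm w.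
Proof. intros H.
  pose proof (norm_pos _ (cross_nz_l _ _ H)) as Hx.
  pose proof (norm_pos _ (cross_nz_r _ _ H)) as Hy.
  pose proof (lagrange d w). pose proof (norm_sq d). pose proof (norm_sq w).
  assert (0 < cross d w * cross d w) by (apply Rsqr_pos_lt; auto).
  assert (0 < norm d * norm w) by nra. nra. Qed.

Lemma norm_add_lt d w t : 0 < t -> cross d w <> 0 -> norm (vadd d (vscale t w)) < norm d + t * norm w.
Proof. intros Ht H. pose proof (dot_lt_norm _ _ H).
  pose proof (norm_sq (vadd d (vscale t w))) as E.
  replace (dot (vadd d (vscale t w)) (vadd d (vscale t w))) with (dot d d + 2*t*dot d w + t*t*dot w w) in E by req.
  pose proof (norm_sq d); pose proof (norm_sq w). pose proof (norm_nonneg d); pose proof (norm_nonneg w).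
  pose proof (norm_nonneg (vadd d (vscale t w))).
  set (S := norm (vadd d (vscale t w))) in *.
  destruct (Rlt_dec S (norm d + t * norm w)); auto. exfalso.
  assert (HA : 0 <= norm d + t*norm w) by (assert (0 <= t * norm w) by (apply Rmult_le_pos; lra); lra).
  assert (S * S >= (norm d + t*norm w) * (norm d + t*norm w)).
  { apply Rle_ge. apply Rmult_le_compat; lra. }
  nra. Qed.

Lemma turn_dot l th X i : th <= PI/2 -> dccp l th X -> (1 <= i)%nat -> (S i < length X)%nat ->
  0 <= dot (edir X (pred i)) (edir X i).
Proof. intros Hth [_ [D2 _]] H1 H2. apply (angle_dot _ _ th); auto. apply D2; auto. Qed.

Lemma edir_nz l th X i : dccp l th X -> (S i < length X)%nat -> edir X i <> (0,0).
Proof. intros [D1 _] H E. apply (D1 i); [unfold nedges; lia|]. apply edir_zero; auto. Qed.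

Lemma dot_sym a b : dot a b = dot b a.
Proof. unfold dot; ring. Qed.

Section MoveA.
Variables (l th : R) (X : list pt) (m : nat).
Hypotheses (Hth0 : 0 <= th) (Hth : th <= PI/2) (HX : dccp l th X) (Hm1 : (1 <= m)%nat)
  (Hm2 : (S (S m) < length X)%nat) (Hsh : short l X (pred m)) (Hns : ~ short l X m)
  (Hinf : 0 < cross (edir X m) (edir X (pred m)) * cross (edir X m) (edir X (S m))).

Let w := edir X (pred m).
Let d := edir X m.
Let z := edir X (S m).
Let Q t := upd X m (vsub (vtx X m) (vscale t w)).

Lemma QA_len t : length (Q t) = length X.
Proof. apply length_upd. Qed.

Lemma QA_e1 t : edir (Q t) (pred m) = vscale (1 - t) w.
Proof. unfold Q. rewrite edir_upd_prev by lia. unfold w, edir. replace (S (pred m)) with m by lia. veq. Qed.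

Lemma QA_e2 t : edir (Q t) m = vadd d (vscale t w).
Proof. unfold Q. rewrite edir_upd_next by lia. unfold d, w, edir. replace (S (pred m)) with m by lia. veq. Qed.

Lemma QA_eo t i : i <> pred m -> i <> m -> edir (Q t) i = edir X i.
Proof. intros. unfold Q. apply edir_upd_other; lia. Qed.


Lemma moveA_ev : ev (fun t => t < 1 /\ dccp l th (Q t) /\ (nonzero_turns X -> nonzero_turns (Q t))
   /\ path_length (Q t) < path_length X).
Proof.
  pose proof HX as HX'. destruct HX' as [D1 [D2 [D3 D4]]].
  assert (Hcw : cross d w <> 0) by (intro E; fold d w z in Hinf; rewrite E in Hinf; lra).
  assert (Hcz : cross d z <> 0) by (intro E; fold d w z in Hinf; rewrite E in Hinf; lra).
  assert (Hw0 : w <> (0,0)) by (apply (edir_nz l th); auto; lia).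
  assert (Tm : angle w d <= th) by (unfold w, d; apply (D2 m); lia).
  assert (TSm : angle d z <= th) by (unfold d, z; replace m with (pred (S m)) at 1 by lia; apply (D2 (S m)); lia).
  assert (Dwd : 0 <= dot w d) by (apply (angle_dot _ _ th); auto).
  assert (Ddz : 0 <= dot d z) by (apply (angle_dot _ _ th); auto).
  pose proof (L_lem w d w ltac:(auto) ltac:(apply Rsqr_pos_lt; auto)) as E1.
  pose proof (L_lem_sym z d w ltac:(rewrite dot_sym; auto) ltac:(fold d w z in Hinf; nra)) as E2.
  assert (E3 : ev (fun t => (non_inflection X (pred m) /\ short l X (pred m)) ->
      angle (edir X (pred (pred m))) (vadd d (vscale t w)) <= th)).
  { destruct (classic (non_inflection X (pred m) /\ short l X (pred m))) as [[Hni Hs]|Hno];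
      [|apply ev_all; intros; contradiction].
    pose proof (D4 (pred m) Hs Hni) as Ha. replace (S (pred m)) with m in Ha by lia. fold d in Ha.
    destruct Hni as [[Hb1 Hb2] Hnot].
    set (x := edir X (pred (pred m))) in *.
    assert (Hxd : 0 <= dot x d) by (apply (angle_dot _ _ th); auto).
    assert (Hxw : 0 <= dot x w).
    { apply (angle_dot _ _ th); auto. unfold x, w. apply (D2 (pred m)); lia. }
    assert (Hx0 : x <> (0,0)) by (apply (edir_nz l th); auto; lia).
    assert (Hsl : 0 < cross d x * cross d w).
    { apply SL; auto.
      - rewrite dot_sym; auto.
      - rewrite dot_sym; auto.
      - rewrite dot_sym; auto.
      - destruct (Rle_dec (cross w d * cross w x) 0) as [|Hc]; auto. exfalso. apply Hnot.
        apply infl_iff. split; [split; auto|]. fold w x. replace (S (pred m)) with m by lia. fold d. nra. }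
    apply (ev_mono _ _ (L_lem x d w Hxd Hsl)). intros t _ H _. lra. }
  assert (E4 : ev (fun t => inflection X (S m) ->
      0 < cross z (vadd d (vscale t w)) * cross z (edir X (S (S m))))).
  { destruct (classic (inflection X (S m))) as [Hi|Hi]; [|apply ev_all; intros; contradiction].
    apply infl_iff in Hi. destruct Hi as [_ Hi]. simpl pred in Hi. fold z d in Hi.
    apply (ev_mono _ _ (ev_pos _ (cross z w * cross z (edir X (S (S m)))) 0 Hi)).
    intros t _ H _. replace (cross z (vadd d (vscale t w)) * cross z (edir X (S (S m)))) with
      (cross z d * cross z (edir X (S (S m))) + cross z w * cross z (edir X (S (S m))) * t + 0 * (t*t)) by req.
    auto. }
  assert (E5 : ev (fun t => (non_inflection X (S m) /\ short l X (S m)) ->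
      angle (vadd d (vscale t w)) (edir X (S (S m))) <= th)).
  { destruct (classic (non_inflection X (S m) /\ short l X (S m))) as [[Hni Hs]|Hno];
      [|apply ev_all; intros; contradiction].
    pose proof (D4 (S m) Hs Hni) as Ha. simpl pred in Ha. fold d in Ha.
    destruct Hni as [[Hb1 Hb2] Hnot].
    set (y := edir X (S (S m))) in *.
    assert (Hyd : 0 <= dot y d) by (rewrite dot_sym; apply (angle_dot _ _ th); auto).
    assert (Hzy : 0 <= dot z y).
    { apply (angle_dot _ _ th); auto. unfold z, y. replace (S m) with (pred (S (S m))) at 1 by lia. apply (D2 (S (S m))); lia. }
    assert (Hy0 : y <> (0,0)) by (apply (edir_nz l th); auto; lia).
    assert (Hsl : 0 < cross d y * cross d z).
    { apply SL; auto.
      - rewrite dot_sym; auto.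
      - destruct (Rle_dec (cross z d * cross z y) 0) as [|Hc]; auto. exfalso. apply Hnot.
        apply infl_iff. split; [split; auto|]. simpl pred. fold z d y. nra. }
    assert (Hsl2 : 0 < cross d y * cross d w) by (fold d w z in Hinf; nra).
    apply (ev_mono _ _ (L_lem_sym y d w Hyd Hsl2)). intros t _ H _. lra. }
  assert (E6 : ev (fun t => 0 < cross (vadd d (vscale t w)) z * cross d z)).
  { apply (ev_mono _ _ (ev_pos (cross d z * cross d z) (cross w z * cross d z) 0 ltac:(apply Rsqr_pos_lt; auto))).
    intros t _ H. replace (cross (vadd d (vscale t w)) z * cross d z) with
      (cross d z * cross d z + cross w z * cross d z * t + 0 * (t*t)) by req. auto. }
  pose proof (ev_and _ _ ev_lt1 (ev_and _ _ E1 (ev_and _ _ E2 (ev_and _ _ E3 (ev_and _ _ E4 (ev_and _ _ E5 E6)))))) as EE.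
  apply (ev_mono _ _ EE). intros t Ht [Ht1 [H1 [H2 [H3 [H4 [H5 H6]]]]]].
  assert (Hnsq : ~ short l (Q t) m).
  { unfold short, elen in *. rewrite QA_e2. fold d in Hns. pose proof (norm_add_ge d w t ltac:(lra) ltac:(rewrite dot_sym; auto)). lra. }
  assert (Hx1 : 0 < 1 - t) by lra.
  split; [auto|split; [|split]].
  - apply (dccp_local l th X (Q t) (fun i => i = pred m \/ i = m)).
    + apply QA_len.
    + exact HX.
    + intros i Hi Hc. apply QA_eo; intro; apply Hc; auto.
    + intros i Hi [-> | ->].
      * rewrite QA_e1; apply vscale_nz; [lra|auto].
      * rewrite QA_e2. apply (cross_nz_r w). replace (cross w (vadd d (vscale t w))) with (- cross d w) by req. lra.
    + intros i Hi1 Hi2 Hc. unfold turn.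
      assert (Hc' : i = m \/ i = S m \/ i = pred m) by lia.
      destruct Hc' as [-> | [-> | ->]].
      * rewrite QA_e1, QA_e2, angle_scale_l by lra. lra.
      * simpl pred. rewrite QA_e2, (QA_eo t (S m)) by lia. fold z. lra.
      * rewrite QA_e1, (QA_eo t (pred (pred m))) by lia. rewrite angle_scale_r by lra. apply D2; lia.
    + intros i Hi Hc. unfold nedges in Hi.
      assert (Hc' : i = m \/ S i = m \/ S (S i) = m) by lia.
      destruct Hc' as [-> | [Hi' | Hi']].
      * intros [Hs _]; auto.
      * intros [_ Hs]; rewrite Hi' in Hs; auto.
      * unfold short, elen. rewrite (QA_eo t i) by lia. intros [Hs _].
        apply (D3 i); [unfold nedges; lia|]. split; auto. replace (S i) with (pred m) by lia. auto.
    + intros j0 Hc Hs Hni. pose proof Hni as [[Hb1 Hb2] Hnot]. rewrite QA_len in Hb2.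
      assert (Hc' : j0 = m \/ j0 = S m \/ j0 = pred m \/ S (S j0) = m) by lia.
      destruct Hc' as [-> | [-> | [-> | Hj]]].
      * contradiction.
      * simpl pred. rewrite QA_e2, (QA_eo t (S (S m))) by lia.
        destruct (classic (inflection X (S m))) as [Hi|Hi].
        -- exfalso. apply Hnot. apply infl_iff. split; [split; auto; rewrite QA_len; auto|].
           simpl pred. rewrite QA_e2, !(QA_eo t (S _)) by lia. fold z. apply H4; auto.
        -- apply H5. split.
           ++ split; [split; auto|auto].
           ++ unfold short, elen in *. rewrite (QA_eo t (S m)) in Hs by lia. auto.
      * replace (S (pred m)) with m by lia. rewrite QA_e2, (QA_eo t (pred (pred m))) by lia.
        apply H3. split; auto. split; [split; auto|]. intro Hi. apply Hnot.
        apply infl_iff in Hi. destruct Hi as [_ Hi]. apply infl_iff. split; [split; auto; rewrite QA_len; auto|].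
        replace (S (pred m)) with m in * by lia.
        rewrite QA_e1, QA_e2, (QA_eo t (pred (pred m))) by lia. fold w d in Hi.
        replace (cross (vscale (1 - t) w) (edir X (pred (pred m))) * cross (vscale (1 - t) w) (vadd d (vscale t w)))
          with (((1-t)*(1-t)) * (cross w (edir X (pred (pred m))) * cross w d)) by req.
        apply Rmult_lt_0_compat; auto. nra.
      * exfalso. unfold short, elen in Hs. rewrite (QA_eo t j0) in Hs by lia.
        apply (D3 j0); [unfold nedges; lia|]. split; auto. replace (S j0) with (pred m) by lia. auto.
  - intros HNZ. apply (nonzero_local X (Q t) (fun i => i = pred m \/ i = m)); auto.
    + apply QA_len.
    + intros i Hi Hc. apply QA_eo; intro; apply Hc; auto.
    + intros i Hi1 Hi2 Hc. unfold turn.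
      assert (Hc' : i = m \/ i = S m \/ i = pred m) by lia.
      destruct Hc' as [-> | [-> | ->]].
      * rewrite QA_e1, QA_e2, angle_scale_l by lra. apply angle_ne0.
        replace (cross w (vadd d (vscale t w))) with (- cross d w) by req. lra.
      * simpl pred. rewrite QA_e2, (QA_eo t (S m)) by lia. fold z. apply angle_ne0.
        intro E; rewrite E in H6; lra.
      * rewrite QA_e1, (QA_eo t (pred (pred m))) by lia. rewrite angle_scale_r by lra. apply HNZ; lia.
  - unfold Q. pose proof (path_length_upd X m (vsub (vtx X m) (vscale t w)) Hm1 ltac:(lia)) as E.
    unfold Defs.dist in E.
    replace (vsub (vtx X m) (vtx X (pred m))) with w in E by (unfold w, edir; replace (S (pred m)) with m by lia; reflexivity).
    replace (vsub (vtx X (S m)) (vtx X m)) with d in E by reflexivity.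
    replace (vsub (vsub (vtx X m) (vscale t w)) (vtx X (pred m))) with (vscale (1-t) w) in E
      by (unfold w, edir; replace (S (pred m)) with m by lia; veq).
    replace (vsub (vtx X (S m)) (vsub (vtx X m) (vscale t w))) with (vadd d (vscale t w)) in E by (unfold d, edir; veq).
    rewrite norm_scale in E by lra.
    pose proof (norm_add_lt d w t Ht Hcw). lra.
Qed.
End MoveA.

Section MoveB.
Variables (l th : R) (X : list pt) (m : nat).
Hypotheses (Hth : th <= PI/2) (HX : dccp l th X) (Hm1 : (2 <= m)%nat)
  (Hm2 : (S m < length X)%nat) (Hsh : short l X m) (Hns : ~ short l X (pred m))
  (Hinf : 0 < cross (edir X (pred m)) (edir X (pred (pred m))) * cross (edir X (pred m)) (edir X m)).

Let w := edir X (pred (pred m)).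
Let d := edir X (pred m).
Let z := edir X m.
Let Q t := upd X m (vadd (vtx X m) (vscale t z)).

Lemma QB_len t : length (Q t) = length X.
Proof. apply length_upd. Qed.

Lemma QB_e1 t : edir (Q t) (pred m) = vadd d (vscale t z).
Proof. unfold Q. rewrite edir_upd_prev by lia. unfold d, z, edir. replace (S (pred m)) with m by lia. veq. Qed.

Lemma QB_e2 t : edir (Q t) m = vscale (1 - t) z.
Proof. unfold Q. rewrite edir_upd_next by lia. unfold z, edir. veq. Qed.

Lemma QB_eo t i : i <> pred m -> i <> m -> edir (Q t) i = edir X i.
Proof. intros. unfold Q. apply edir_upd_other; lia. Qed.

Lemma moveB_ev : ev (fun t => t < 1 /\ dccp l th (Q t) /\ (nonzero_turns X -> nonzero_turns (Q t))
   /\ path_length (Q t) < path_length X).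
Proof.
  pose proof HX as HX'. destruct HX' as [D1 [D2 [D3 D4]]].
  fold w d z in Hinf.
  assert (Hcw : cross d w <> 0) by (intro E; rewrite E in Hinf; lra).
  assert (Hcz : cross d z <> 0) by (intro E; rewrite E in Hinf; lra).
  assert (Hz0 : z <> (0,0)) by (apply (edir_nz l th); auto; lia).
  assert (Tm : angle w d <= th) by (unfold w, d; apply (D2 (pred m)); lia).
  assert (Tm2 : angle d z <= th) by (unfold d, z; apply (D2 m); lia).
  assert (Dwd : 0 <= dot w d) by (apply (angle_dot _ _ th); auto).
  assert (Ddz : 0 <= dot d z) by (apply (angle_dot _ _ th); auto).
  pose proof (L_lem w d z ltac:(auto) ltac:(nra)) as E1.
  pose proof (L_lem_sym z d z ltac:(rewrite dot_sym; auto) ltac:(apply Rsqr_pos_lt; auto)) as E2.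
  assert (E3 : ev (fun t => (non_inflection X m /\ short l X m) ->
      angle (vadd d (vscale t z)) (edir X (S m)) <= th)).
  { destruct (classic (non_inflection X m /\ short l X m)) as [[Hni Hs]|Hno];
      [|apply ev_all; intros; contradiction].
    pose proof (D4 m Hs Hni) as Ha. fold d in Ha.
    destruct Hni as [[Hb1 Hb2] Hnot].
    set (y := edir X (S m)) in *.
    assert (Hyd : 0 <= dot y d) by (rewrite dot_sym; apply (angle_dot _ _ th); auto).
    assert (Hzy : 0 <= dot z y).
    { apply (angle_dot _ _ th); auto. unfold z, y. replace m with (pred (S m)) at 1 by lia. apply (D2 (S m)); lia. }
    assert (Hy0 : y <> (0,0)) by (apply (edir_nz l th); auto; lia).
    assert (Hsl : 0 < cross d y * cross d z).
    { apply SL; auto.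
      - rewrite dot_sym; auto.
      - destruct (Rle_dec (cross z d * cross z y) 0) as [|Hc]; auto. exfalso. apply Hnot.
        apply infl_iff. split; [split; auto|]. fold z d y. nra. }
    apply (ev_mono _ _ (L_lem_sym y d z Hyd Hsl)). intros t _ H _. lra. }
  assert (E4 : ev (fun t => inflection X (pred (pred m)) ->
      0 < cross w (edir X (pred (pred (pred m)))) * cross w (vadd d (vscale t z)))).
  { destruct (classic (inflection X (pred (pred m)))) as [Hi|Hi]; [|apply ev_all; intros; contradiction].
    apply infl_iff in Hi. destruct Hi as [_ Hi]. replace (S (pred (pred m))) with (pred m) in Hi by lia. fold w d in Hi.
    apply (ev_mono _ _ (ev_pos _ (cross w (edir X (pred (pred (pred m)))) * cross w z) 0 Hi)).
    intros t _ H _. replace (cross w (edir X (pred (pred (pred m)))) * cross w (vadd d (vscale t z))) with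
      (cross w (edir X (pred (pred (pred m)))) * cross w d + cross w (edir X (pred (pred (pred m)))) * cross w z * t + 0 * (t*t)) by req.
    auto. }
  assert (E5 : ev (fun t => (non_inflection X (pred (pred m)) /\ short l X (pred (pred m))) ->
      angle (edir X (pred (pred (pred m)))) (vadd d (vscale t z)) <= th)).
  { destruct (classic (non_inflection X (pred (pred m)) /\ short l X (pred (pred m)))) as [[Hni Hs]|Hno];
      [|apply ev_all; intros; contradiction].
    pose proof (D4 (pred (pred m)) Hs Hni) as Ha. replace (S (pred (pred m))) with (pred m) in Ha by lia. fold d in Ha.
    destruct Hni as [[Hb1 Hb2] Hnot].
    set (x := edir X (pred (pred (pred m)))) in *.
    assert (Hxd : 0 <= dot x d) by (apply (angle_dot _ _ th); auto).
    assert (Hxw : 0 <= dot x w).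
    { apply (angle_dot _ _ th); auto. unfold x, w. apply (D2 (pred (pred m))); lia. }
    assert (Hx0 : x <> (0,0)) by (apply (edir_nz l th); auto; lia).
    assert (Hsl : 0 < cross d x * cross d w).
    { apply SL; auto.
      - rewrite dot_sym; auto.
      - rewrite dot_sym; auto.
      - rewrite dot_sym; auto.
      - destruct (Rle_dec (cross w d * cross w x) 0) as [|Hc]; auto. exfalso. apply Hnot.
        apply infl_iff. split; [split; auto|]. fold w x. replace (S (pred (pred m))) with (pred m) by lia. fold d. nra. }
    assert (Hpp : 0 < (cross d x * cross d w) * (cross d w * cross d z)) by (apply Rmult_lt_0_compat; auto).
    assert (Hsl2 : 0 < cross d x * cross d z).
    { destruct (Rlt_dec 0 (cross d x * cross d z)) as [|Hn]; auto. exfalso. apply Rnot_lt_le in Hn.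
      assert (0 <= cross d w * cross d w) by nra.
      replace ((cross d x * cross d w) * (cross d w * cross d z)) with ((cross d x * cross d z) * (cross d w * cross d w)) in Hpp by ring.
      assert (Hab : forall A B : R, 0 < A*B -> 0 <= B -> A <= 0 -> False) by (intros A B h1 h2 h3; nra).
      eapply Hab; eauto. }
    apply (ev_mono _ _ (L_lem x d z Hxd Hsl2)). intros t _ H _. lra. }
  assert (E6 : ev (fun t => 0 < cross w (vadd d (vscale t z)) * cross w d)).
  { assert (Hcw' : cross w d <> 0) by (intro E; apply Hcw; replace (cross d w) with (- cross w d) by req; rewrite E; ring).
    apply (ev_mono _ _ (ev_pos (cross w d * cross w d) (cross w z * cross w d) 0 ltac:(apply Rsqr_pos_lt; auto))).
    intros t _ H. replace (cross w (vadd d (vscale t z)) * cross w d) with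
      (cross w d * cross w d + cross w z * cross w d * t + 0 * (t*t)) by req. auto. }
  pose proof (ev_and _ _ ev_lt1 (ev_and _ _ E1 (ev_and _ _ E2 (ev_and _ _ E3 (ev_and _ _ E4 (ev_and _ _ E5 E6)))))) as EE.
  apply (ev_mono _ _ EE). intros t Ht [Ht1 [H1 [H2 [H3 [H4 [H5 H6]]]]]].
  assert (Hnsq : ~ short l (Q t) (pred m)).
  { unfold short, elen in *. rewrite QB_e1. fold d in Hns. pose proof (norm_add_ge d z t ltac:(lra) Ddz). lra. }
  assert (Hx1 : 0 < 1 - t) by lra.
  assert (HnsS : (S (S m) < length X)%nat -> ~ short l X (S m)).
  { intros Hlt Hs. apply (D3 m); [unfold nedges; lia|]. split; auto. }
  split; [auto|split; [|split]].
  - apply (dccp_local l th X (Q t) (fun i => i = pred m \/ i = m)).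
    + apply QB_len.
    + exact HX.
    + intros i Hi Hc. apply QB_eo; intro; apply Hc; auto.
    + intros i Hi [-> | ->].
      * rewrite QB_e1. apply (cross_nz_l _ z). replace (cross (vadd d (vscale t z)) z) with (cross d z) by req. auto.
      * rewrite QB_e2; apply vscale_nz; [lra|auto].
    + intros i Hi1 Hi2 Hc. unfold turn.
      assert (Hc' : i = m \/ i = S m \/ i = pred m) by lia.
      destruct Hc' as [-> | [-> | ->]].
      * rewrite QB_e1, QB_e2, angle_scale_r by lra. lra.
      * simpl pred. rewrite QB_e2, (QB_eo t (S m)) by lia. rewrite angle_scale_l by lra. apply (D2 (S m)); lia.
      * rewrite QB_e1, (QB_eo t (pred (pred m))) by lia. fold w. lra.
    + intros i Hi Hc. unfold nedges in Hi.
      assert (Hc' : i = pred m \/ S i = pred m \/ i = m) by lia.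
      destruct Hc' as [-> | [Hi' | ->]].
      * intros [Hs _]; auto.
      * intros [_ Hs]; rewrite Hi' in Hs; auto.
      * unfold short, elen. rewrite (QB_eo t (S m)) by lia. intros [_ Hs]. apply HnsS; auto; lia.
    + intros j0 Hc Hs Hni. pose proof Hni as [[Hb1 Hb2] Hnot]. rewrite QB_len in Hb2.
      assert (Hc' : j0 = m \/ j0 = S m \/ j0 = pred m \/ S j0 = pred m) by lia.
      destruct Hc' as [-> | [-> | [-> | Hj]]].
      * rewrite QB_e1, (QB_eo t (S m)) by lia.
        apply H3. split; auto. split; [split; auto|]. intro Hi. apply Hnot.
        apply infl_iff in Hi. destruct Hi as [_ Hi]. apply infl_iff. split; [split; auto; rewrite QB_len; auto|].
        rewrite QB_e1, QB_e2, (QB_eo t (S m)) by lia. fold d z in Hi.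
        replace (cross (vscale (1 - t) z) (vadd d (vscale t z)) * cross (vscale (1 - t) z) (edir X (S m)))
          with (((1-t)*(1-t)) * (cross z d * cross z (edir X (S m)))) by req.
        apply Rmult_lt_0_compat; auto. nra.
      * exfalso. unfold short, elen in Hs. rewrite (QB_eo t (S m)) in Hs by lia. apply HnsS; auto; lia.
      * contradiction.
      * replace j0 with (pred (pred m)) in * by lia.
        replace (S (pred (pred m))) with (pred m) by lia.
        rewrite QB_e1, (QB_eo t (pred (pred (pred m)))) by lia.
        destruct (classic (inflection X (pred (pred m)))) as [Hi|Hi].
        -- exfalso. apply Hnot. apply infl_iff. split; [split; auto; rewrite QB_len; auto|].
           replace (S (pred (pred m))) with (pred m) by lia.
           rewrite QB_e1, !(QB_eo t (pred (pred _))) by lia. fold w. 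
           replace (cross w (vadd d (vscale t z)) * cross w (edir X (pred (pred (pred m))))) with
             (cross w (edir X (pred (pred (pred m)))) * cross w (vadd d (vscale t z))) by ring.
           apply H4; auto.
        -- apply H5. split.
           ++ split; [split; auto|auto].
           ++ unfold short, elen in *. rewrite (QB_eo t (pred (pred m))) in Hs by lia. auto.
  - intros HNZ. apply (nonzero_local X (Q t) (fun i => i = pred m \/ i = m)); auto.
    + apply QB_len.
    + intros i Hi Hc. apply QB_eo; intro; apply Hc; auto.
    + intros i Hi1 Hi2 Hc. unfold turn.
      assert (Hc' : i = m \/ i = S m \/ i = pred m) by lia.
      destruct Hc' as [-> | [-> | ->]].
      * rewrite QB_e1, QB_e2, angle_scale_r by lra. apply angle_ne0.
        replace (cross (vadd d (vscale t z)) z) with (cross d z) by req. auto.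
      * simpl pred. rewrite QB_e2, (QB_eo t (S m)) by lia. rewrite angle_scale_l by lra. apply (HNZ (S m)); lia.
      * rewrite QB_e1, (QB_eo t (pred (pred m))) by lia. fold w. apply angle_ne0.
        intro E; rewrite E in H6; lra.
  - unfold Q. pose proof (path_length_upd X m (vadd (vtx X m) (vscale t z)) ltac:(lia) ltac:(lia)) as E.
    unfold Defs.dist in E.
    replace (vsub (vtx X m) (vtx X (pred m))) with d in E by (unfold d, edir; replace (S (pred m)) with m by lia; reflexivity).
    replace (vsub (vtx X (S m)) (vtx X m)) with z in E by reflexivity.
    replace (vsub (vadd (vtx X m) (vscale t z)) (vtx X (pred m))) with (vadd d (vscale t z)) in E
      by (unfold d, edir; replace (S (pred m)) with m by lia; veq).
    replace (vsub (vtx X (S m)) (vadd (vtx X m) (vscale t z))) with (vscale (1-t) z) in E by (unfold z, edir; veq).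
    rewrite norm_scale in E by lra.
    pose proof (norm_add_lt d z t Ht Hcz). lra.
Qed.
End MoveB.

Lemma vtx_app P L i : (i < length P)%nat -> vtx (P ++ L) i = vtx P i.
Proof. intros; unfold vtx; apply app_nth1; auto. Qed.

Lemma edir_app P L i : (S i < length P)%nat -> edir (P ++ L) i = edir P i.
Proof. intros; unfold edir; rewrite !vtx_app by lia; auto. Qed.

Lemma ev_pick (Q : R -> Prop) : ev Q -> exists t, 0 < t /\ Q t.
Proof. intros [e [He H]]. exists (e/2). split; [lra|]. apply H; lra. Qed.

Lemma no_short_prev l th u U v V P j :
  th <= PI/2 -> dubins l th u U v V P -> inflection P j -> ~ short l P (pred j).
Proof.
  intros Hth [Hd [Hnz [Hst [Hen Hmin]]]] Hinf Hs.
  pose proof Hinf as Hinf'. apply infl_iff in Hinf'. destruct Hinf' as [[Hb1 Hb2] Hval].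
  destruct Hst as [P' [HPe Hdc1]]. destruct Hen as [_ [Hlast Hdc2]].
  destruct j as [|j']; [lia|]. simpl pred in *.
  assert (Hns : ~ short l P (S j')).
  { pose proof Hd as [_ [_ [D3 _]]]. intro H. apply (D3 j'); [unfold nedges; lia|]. auto. }
  pose proof (moveA_ev l th P (S j') Hth Hd ltac:(lia) Hb2 Hs Hns Hval) as EA1.
  assert (EA2 := moveA_ev l th (vsub u U :: P) (S (S j')) Hth Hdc1 ltac:(lia) ltac:(simpl; lia) Hs Hns Hval).
  assert (Hs3 : short l (P ++ [vadd v V]) j').
  { unfold short, elen in *. rewrite edir_app by lia. auto. }
  assert (Hns3 : ~ short l (P ++ [vadd v V]) (S j')).
  { unfold short, elen in *. rewrite edir_app by lia. auto. }
  assert (Hval3 : 0 < cross (edir (P ++ [vadd v V]) (S j')) (edir (P ++ [vadd v V]) (pred (S j'))) *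
                      cross (edir (P ++ [vadd v V]) (S j')) (edir (P ++ [vadd v V]) (S (S j')))).
  { simpl pred. rewrite !edir_app by lia. auto. }
  assert (EA3 := moveA_ev l th (P ++ [vadd v V]) (S j') Hth Hdc2 ltac:(lia)
     ltac:(rewrite length_app; simpl; lia) Hs3 Hns3 Hval3).
  destruct (ev_pick _ (ev_and _ _ EA1 (ev_and _ _ EA2 EA3))) as [t [Ht [[Ht1 [Q1 [Q2 Q3]]] [[_ [R1 _]] [_ [S1 _]]]]]].
  simpl pred in *.
  rewrite edir_app, vtx_app in S1 by lia.
  rewrite upd_app in S1 by lia.
  set (Q := upd P (S j') (vsub (vtx P (S j')) (vscale t (edir P j')))) in *.
  assert (HQ := Hmin Q Q1 (Q2 Hnz)).
  assert (path_length P <= path_length Q).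
  { apply HQ.
    - subst P. exists (upd P' j' (vsub (vtx (u :: P') (S j')) (vscale t (edir (u :: P') j')))).
      split; [reflexivity|]. exact R1.
    - split; [unfold Q; destruct P; simpl; [simpl in Hb2; lia|discriminate]|].
      split; [unfold Q; rewrite last_upd by lia; auto|]. exact S1. }
  lra.
Qed.

Lemma no_short_next l th u U v V P j :
  th <= PI/2 -> dubins l th u U v V P -> inflection P j -> ~ short l P (S j).
Proof.
  intros Hth [Hd [Hnz [Hst [Hen Hmin]]]] Hinf Hs.
  pose proof Hinf as Hinf'. apply infl_iff in Hinf'. destruct Hinf' as [[Hb1 Hb2] Hval].
  destruct Hst as [P' [HPe Hdc1]]. destruct Hen as [_ [Hlast Hdc2]].
  destruct j as [|j']; [lia|]. simpl pred in *.
  assert (Hns : ~ short l P (S j')).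
  { pose proof Hd as [_ [_ [D3 _]]]. intro H. apply (D3 (S j')); [unfold nedges; lia|]. auto. }
  pose proof (moveB_ev l th P (S (S j')) Hth Hd ltac:(lia) Hb2 Hs Hns Hval) as EB1.
  assert (EB2 := moveB_ev l th (vsub u U :: P) (S (S (S j'))) Hth Hdc1 ltac:(lia) ltac:(simpl; lia) Hs Hns Hval).
  assert (Hs3 : short l (P ++ [vadd v V]) (S (S j'))).
  { unfold short, elen in *. rewrite edir_app by lia. auto. }
  assert (Hns3 : ~ short l (P ++ [vadd v V]) (pred (S (S j')))).
  { unfold short, elen in *. simpl pred. rewrite edir_app by lia. auto. }
  assert (Hval3 : 0 < cross (edir (P ++ [vadd v V]) (pred (S (S j')))) (edir (P ++ [vadd v V]) (pred (pred (S (S j'))))) *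
                      cross (edir (P ++ [vadd v V]) (pred (S (S j')))) (edir (P ++ [vadd v V]) (S (S j')))).
  { simpl pred. rewrite !edir_app by lia. auto. }
  assert (EB3 := moveB_ev l th (P ++ [vadd v V]) (S (S j')) Hth Hdc2 ltac:(lia)
     ltac:(rewrite length_app; simpl; lia) Hs3 Hns3 Hval3).
  destruct (ev_pick _ (ev_and _ _ EB1 (ev_and _ _ EB2 EB3))) as [t [Ht [[Ht1 [Q1 [Q2 Q3]]] [[_ [R1 _]] [_ [S1 _]]]]]].
  rewrite edir_app, vtx_app in S1 by lia.
  rewrite upd_app in S1 by lia.
  set (Q := upd P (S (S j')) (vadd (vtx P (S (S j'))) (vscale t (edir P (S (S j')))))) in *.
  assert (HQ := Hmin Q Q1 (Q2 Hnz)).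
  assert (path_length P <= path_length Q).
  { apply HQ.
    - subst P. exists (upd P' (S j') (vadd (vtx (u :: P') (S (S j'))) (vscale t (edir (u :: P') (S (S j')))))).
      split; [reflexivity|]. exact R1.
    - split; [unfold Q; destruct P; simpl; [simpl in Hb2; lia|discriminate]|].
      split; [unfold Q; rewrite last_upd by lia; auto|]. exact S1. }
  lra.
Qed.

Theorem lemma3 (theta l : R) (k : nat)
  (Htheta_pos : 0 <= theta) (Htheta_le : theta <= PI / 2)
  (Hk : theta * INR k = 2 * PI) (Hl : 0 < l)
  (u U v V : pt) (HU : is_config l U) (HV : is_config l V)
  (P : list pt) (HP : dubins l theta u U v V P)
  (j : nat) (Hinf : inflection P j)
  (T : pt) (HT : admissible P j T) :
  exists eps : R, 0 < eps /\
    dccp l theta (translate_tail P (S j) (vscale eps T)).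
Proof.
  pose proof (no_short_prev _ _ _ _ _ _ _ _ Htheta_le HP Hinf) as NS1.
  pose proof (no_short_next _ _ _ _ _ _ _ _ Htheta_le HP Hinf) as NS2.
  destruct HP as [Hd _]. pose proof Hd as [D1 [D2 [D3 D4]]].
  pose proof Hinf as Hinf'. apply infl_iff in Hinf'. destruct Hinf' as [[Hb1 Hb2] Hval].
  unfold admissible in HT.
  set (w := edir P (pred j)) in *. set (d := edir P j) in *. set (z := edir P (S j)) in *.
  assert (Hcz : cross d z <> 0) by (intro E; rewrite E in HT; lra).
  assert (HdT : cross d T <> 0) by (intro E; rewrite E in HT; lra).
  assert (Hwt : 0 < cross d w * cross d T).
  { assert (Hpp : 0 < (cross d w * cross d z) * (cross d T * cross d z)) by (apply Rmult_lt_0_compat; lra).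
    replace ((cross d w * cross d z) * (cross d T * cross d z)) with ((cross d w * cross d T) * (cross d z * cross d z)) in Hpp by ring.
    destruct (Rlt_dec 0 (cross d w * cross d T)) as [|Hn]; auto. exfalso. apply Rnot_lt_le in Hn.
    assert (0 <= cross d z * cross d z) by nra.
    assert (Hab : forall A B : R, 0 < A*B -> 0 <= B -> A <= 0 -> False) by (intros A B h1 h2 h3; nra).
    eapply Hab; eauto. }
  assert (Tj : angle w d <= theta) by (unfold w, d; apply (D2 j); lia).
  assert (TSj : angle d z <= theta) by (unfold d, z; replace j with (pred (S j)) at 1 by lia; apply (D2 (S j)); lia).
  assert (Dwd : 0 <= dot w d) by (apply (angle_dot _ _ theta); auto).
  assert (Ddz : 0 <= dot d z) by (apply (angle_dot _ _ theta); auto).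
  pose proof (L_lem w d T Dwd Hwt) as G1.
  pose proof (L_lem_sym z d T ltac:(rewrite dot_sym; auto) ltac:(lra)) as G2.
  assert (G3 : ev (fun e => 0 < cross (vadd d (vscale e T)) w * cross (vadd d (vscale e T)) z)).
  { apply (ev_mono _ _ (ev_pos (cross d w * cross d z) (cross d w * cross T z + cross T w * cross d z)
        (cross T w * cross T z) Hval)).
    intros e _ H. replace (cross (vadd d (vscale e T)) w * cross (vadd d (vscale e T)) z) with
      (cross d w * cross d z + (cross d w * cross T z + cross T w * cross d z) * e + (cross T w * cross T z) * (e*e)) by req.
    auto. }
  destruct (ev_pick _ (ev_and _ _ G1 (ev_and _ _ G2 G3))) as [e [He [H1 [H2 H3]]]].
  exists e. split; auto.
  set (P' := translate_tail P (S j) (vscale e T)).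
  assert (Hlen : length P' = length P) by (apply length_tt; lia).
  assert (Ej : edir P' j = vadd d (vscale e T)).
  { unfold P'. replace j with (pred (S j)) at 1 by lia. rewrite edir_tt_eq by lia. reflexivity. }
  assert (Eo : forall i, (S i < length P)%nat -> i <> j -> edir P' i = edir P i).
  { intros i Hi Hij. unfold P'. apply edir_tt_ne; simpl; lia. }
  apply (dccp_local l theta P P' (fun i => i = j)); auto.
  - intros i Hi ->. rewrite Ej. apply (cross_nz_r d).
    replace (cross d (vadd d (vscale e T))) with (e * cross d T) by req.
    apply Rmult_integral_contrapositive; split; lra.
  - intros i Hi1 Hi2 Hc. unfold turn.
    assert (Hc' : i = j \/ i = S j) by lia. destruct Hc' as [-> | ->].
    + rewrite Ej, (Eo (pred j)) by lia. fold w. lra.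
    + simpl pred. rewrite Ej, (Eo (S j)) by lia. fold z. lra.
  - intros i Hi Hc. unfold nedges in Hi. unfold short, elen.
    assert (Hc' : i = j \/ S i = j) by lia. destruct Hc' as [-> | Hi'].
    + rewrite (Eo (S j)) by lia. intros [_ Hs]. apply NS2. exact Hs.
    + rewrite (Eo i) by lia. intros [Hs _]. apply NS1. unfold short, elen. replace (pred j) with i by lia. exact Hs.
  - intros j0 Hc Hs Hni. pose proof Hni as [[Hc1 Hc2] Hnot]. rewrite Hlen in Hc2.
    assert (Hc' : j0 = j \/ j0 = S j \/ S j0 = j) by lia.
    destruct Hc' as [-> | [-> | Hj0]].
    + exfalso. apply Hnot. apply infl_iff. split; [split; auto; rewrite Hlen; auto|].
      rewrite Ej, (Eo (pred j)), (Eo (S j)) by lia. fold w z. exact H3.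
    + exfalso. unfold short, elen in Hs. rewrite (Eo (S j)) in Hs by lia. apply NS2. exact Hs.
    + exfalso. unfold short, elen in Hs. rewrite (Eo j0) in Hs by lia. apply NS1. unfold short, elen.
      replace (pred j) with j0 by lia. exact Hs.
Qed.
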